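(* Let $(L_*,b)$ and $(M_*,b)$ be chain complexes, $i:(L_*,b)\to(M_*,b)$ and $p:(M_*,b)\to(L_*,b)$ chain maps, and $h$ a map of degree $+1$ on $M_*$ with $ip=1+bh+hb$. Let $\delta$ be a small perturbation, put $A=(1-\delta h)^{-1}\delta$, and define $$i_\infty=i+hAi,\quad p_\infty=p+pAh,\quad b_\infty=b+pAi.$$ Then each of the following chain maps is null-homotopic: - $i\circ(p i_\infty-1):(L_*,b_\infty)\to(M_*,b)$; - $(p_\infty i-1)\circ p:(M_*,b)\to(L_*,b_\infty)$; - $(p i_\infty-1)\circ p_\infty:(M_*,b+\delta)\to(L_*,b)$; - $i_\infty\circ(p_\infty i-1):(L_*,b)\to(M_*,b+\delta)$.
   Context: Complexes are chain complexes of modules over a ring, with differentials of degree $-1$. A perturbation $\delta$ is a graded map $M_*\to M_*$ of the same degree as $b$ such that $(b+\delta)^2=0$. It is called small if $1-\delta h$ is invertible. It is known (homological perturbation lemma, HR version) that for a small perturbation, $(L_*,b_\infty)$ is a complex, that $i_\infty:(L_*,b_\infty)\to(M_*,b+\delta)$ and $p_\infty:(M_*,b+\delta)\to(L_*,b_\infty)$ are chain maps, and that $i_\infty p_\infty=1+(b+\delta)h_\infty+h_\infty(b+\delta)$, where $h_\infty=h+hAh$. Moreover, $p_\infty i-1:(L_*,b)\to(L_*,b_\infty)$ and $p i_\infty-1:(L_*,b_\infty)\to(L_*,b)$ are chain maps. *)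

(* Defs.v *)
(* Graded modules are int-indexed families of R-modules;
   a graded map M_* -> N_* is represented by all its components f i j : M i -> N j
   ("matrix" representation of a map on the direct sum), and "degree d" means
   that f i j = 0 unless j = i + d. *)
From HB Require Import structures.
From mathcomp Require Import all_boot all_order all_algebra.
Set Implicit Arguments. Unset Strict Implicit. Unset Printing Implicit Defensive.
Import GRing.Theory.
Local Open Scope ring_scope.

Section Graded.
Variable R : pzRingType.

Definition gmod := int -> lmodType R.

Definition gmap (M N : gmod) := forall i j : int, M i -> N j.

Definition is_gmap (M N : gmod) (d : int) (f : gmap M N) : Prop :=
  (forall i j, j != i + d -> forall x, f i j x = 0) /\
  (forall i j (a : R) (x y : M i), f i j (a *: x + y) = a *: f i j x + f i j y).

Definition gequiv (M N : gmod) (f g : gmap M N) : Prop :=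
  forall i j (x : M i), f i j x = g i j x.

Definition gid (M : gmod) : gmap M M := fun i j x =>
  match i =P j with ReflectT e => ecast k (M k) e x | ReflectF _ => 0 end.

Definition g0 (M N : gmod) : gmap M N := fun i j _ => 0.

Definition gadd (M N : gmod) (f g : gmap M N) : gmap M N :=
  fun i j x => f i j x + g i j x.

Definition gopp (M N : gmod) (f : gmap M N) : gmap M N :=
  fun i j x => - f i j x.

Definition gsub (M N : gmod) (f g : gmap M N) : gmap M N := gadd f (gopp g).

(* gcomp d f g = g o f, where f has degree d (f is applied first) *)
Definition gcomp (M N P : gmod) (d : int) (f : gmap M N) (g : gmap N P) : gmap M P :=
  fun i k x => g (i + d) k (f i (i + d) x).

Definition is_complex (M : gmod) (b : gmap M M) : Prop :=
  is_gmap (-1) b /\ gequiv (gcomp (-1) b b) (@g0 M M).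

Definition is_chain_map (M N : gmod) (bM : gmap M M) (bN : gmap N N)
  (f : gmap M N) : Prop :=
  is_gmap 0 f /\ gequiv (gcomp 0 f bN) (gcomp (-1) bM f).

Definition null_homotopic (M N : gmod) (bM : gmap M M) (bN : gmap N N)
  (f : gmap M N) : Prop :=
  exists H : gmap M N, is_gmap 1 H /\
    gequiv f (gadd (gcomp 1 H bN) (gcomp (-1) bM H)).

End Graded.
Arguments gid {R} M i j.

(* Main.v *)
Require Import Defs.
From HB Require Import structures.
From mathcomp Require Import all_boot all_order all_algebra.
From mathcomp Require Import boolp.
From mathcomp Require Import ring.
From Stdlib Require Import FunctionalExtensionality.
Set Implicit Arguments. Unset Strict Implicit. Unset Printing Implicit Defensive.
Import GRing.Theory.
Local Open Scope ring_scope.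

Section G.
Variable R : pzRingType.

Lemma gext (M N : gmod R) (f g : gmap M N) : gequiv f g -> f = g.
Proof.
move=> H; apply: functional_extensionality_dep => i.
apply: functional_extensionality_dep => j.
apply: functional_extensionality_dep => x; exact: H.
Qed.

Lemma eq_gequiv (M N : gmod R) (f g : gmap M N) : f = g -> gequiv f g.
Proof. by move=> ->. Qed.

HB.instance Definition _ (M N : gmod R) := gen_eqMixin (gmap M N).
HB.instance Definition _ (M N : gmod R) := gen_choiceMixin (gmap M N).

Section Z.
Variables M N : gmod R.
Lemma gaddA' : associative (@gadd R M N).
Proof. by move=> f g h; apply: gext => i j x; rewrite /gadd addrA. Qed.
Lemma gaddC' : commutative (@gadd R M N).
Proof. by move=> f g; apply: gext => i j x; rewrite /gadd addrC. Qed.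
Lemma gadd0' : left_id (@g0 R M N) (@gadd R M N).
Proof. by move=> f; apply: gext => i j x; rewrite /gadd /g0 add0r. Qed.
Lemma gaddN' : left_inverse (@g0 R M N) (@gopp R M N) (@gadd R M N).
Proof. by move=> f; apply: gext => i j x; rewrite /gadd /g0 /gopp addNr. Qed.
HB.instance Definition _ := GRing.isZmodule.Build (gmap M N) gaddA' gaddC' gadd0' gaddN'.
End Z.

Lemma gaddE (M N : gmod R) (f g : gmap M N) : gadd f g = f + g. Proof. by []. Qed.
Lemma goppE (M N : gmod R) (f : gmap M N) : gopp f = - f. Proof. by []. Qed.
Lemma g0E (M N : gmod R) : @g0 R M N = 0. Proof. by []. Qed.
Lemma gsubE (M N : gmod R) (f g : gmap M N) : gsub f g = f - g. Proof. by []. Qed.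

Definition addg (M N : gmod R) (f : gmap M N) :=
  forall i j (x y : M i), f i j (x + y) = f i j x + f i j y.

Lemma addg_is (M N : gmod R) d (f : gmap M N) : is_gmap d f -> addg f.
Proof. by move=> [_ H] i j x y; have := H i j 1 x y; rewrite !scale1r. Qed.

Lemma addg0 (M N : gmod R) (f : gmap M N) i j : addg f -> f i j 0 = 0.
Proof.
move=> H; have e := H i j 0 0; rewrite addr0 in e.
by apply: (addrI (f i j 0)); rewrite -e addr0.
Qed.

Lemma addgN (M N : gmod R) (f : gmap M N) i j x : addg f -> f i j (- x) = - f i j x.
Proof.
move=> H; apply: (addIr (f i j x)); by rewrite -H !addNr addg0.
Qed.

Lemma addg_comp (M N P : gmod R) d (f : gmap M N) (g : gmap N P) :
  addg f -> addg g -> addg (gcomp d f g).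
Proof. by move=> Hf Hg i j x y; rewrite /gcomp Hf Hg. Qed.
Lemma addg_add (M N : gmod R) (f g : gmap M N) : addg f -> addg g -> addg (f + g).
Proof.
move=> Hf Hg i j x y; rewrite -!gaddE /gadd Hf Hg.
by rewrite addrACA.
Qed.
Lemma addg_opp (M N : gmod R) (f : gmap M N) : addg f -> addg (- f).
Proof. by move=> Hf i j x y; rewrite -!goppE /gopp Hf opprD. Qed.
Lemma addg_zero (M N : gmod R) : addg (0 : gmap M N).
Proof. by move=> i j x y; rewrite -!g0E /g0 addr0. Qed.

Lemma gid_refl (M : gmod R) j (x : M j) : gid M j j x = x.
Proof.
rewrite /gid; case: eqP => // e.
by rewrite (eq_irrelevance e erefl).
Qed.
Lemma gid_ne (M : gmod R) j k (x : M j) : j != k -> gid M j k x = 0.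
Proof. by rewrite /gid; case: eqP. Qed.

Lemma addg_id (M : gmod R) : addg (gid M).
Proof.
move=> i j x y; have [e|ne] := eqVneq i j.
  by subst j; rewrite !gid_refl.
by rewrite !gid_ne // addr0.
Qed.

Lemma is_gmap_comp (M N P : gmod R) d e (f : gmap M N) (g : gmap N P) :
  is_gmap d f -> is_gmap e g -> is_gmap (d + e) (gcomp d f g).
Proof.
move=> [df lf] [dg lg]; split.
  move=> i j ne x; rewrite /gcomp dg //; by rewrite -addrA.
by move=> i j a x y; rewrite /gcomp lf lg.
Qed.
Lemma is_gmap_add (M N : gmod R) d (f g : gmap M N) :
  is_gmap d f -> is_gmap d g -> is_gmap d (f + g).
Proof.
move=> [df lf] [dg lg]; split.
  by move=> i j ne x; rewrite -gaddE /gadd df // dg // addr0.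
move=> i j a x y; rewrite -!gaddE /gadd lf lg scalerDr.
by rewrite addrACA.
Qed.
Lemma is_gmap_opp (M N : gmod R) d (f : gmap M N) :
  is_gmap d f -> is_gmap d (- f).
Proof.
move=> [df lf]; split.
  by move=> i j ne x; rewrite -goppE /gopp df // oppr0.
by move=> i j a x y; rewrite -!goppE /gopp lf opprD scalerN.
Qed.
Lemma is_gmap_comp' (M N P : gmod R) d e c (f : gmap M N) (g : gmap N P) :
  is_gmap d f -> is_gmap e g -> d + e = c -> is_gmap c (gcomp d f g).
Proof. by move=> Hf Hg <-; exact: is_gmap_comp. Qed.
Lemma is_gmap_id (M : gmod R) : is_gmap 0 (gid M).
Proof.
split.
  by move=> i j; rewrite addr0 eq_sym => ne x; rewrite gid_ne.
move=> i j a x y; have [e|ne] := eqVneq i j.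
  by subst j; rewrite !gid_refl.
by rewrite !gid_ne // scaler0 addr0.
Qed.
Lemma is_gmap_deg (M N : gmod R) d d' (f : gmap M N) :
  d = d' -> is_gmap d f -> is_gmap d' f.
Proof. by move=> ->. Qed.

Section Comp.
Variables M N P Q : gmod R.

Lemma cDl_g d (f f' : gmap M N) (g : gmap N P) :
  addg g -> gcomp d (f + f') g = gcomp d f g + gcomp d f' g.
Proof. by move=> H; apply: gext => i j x; rewrite /gcomp -!gaddE /gadd H. Qed.
Lemma cNl_g d (f : gmap M N) (g : gmap N P) :
  addg g -> gcomp d (- f) g = - gcomp d f g.
Proof. by move=> H; apply: gext => i j x; rewrite /gcomp -!goppE /gopp addgN. Qed.
Lemma cBl_g d (f f' : gmap M N) (g : gmap N P) :
  addg g -> gcomp d (f - f') g = gcomp d f g - gcomp d f' g.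
Proof. by move=> H; rewrite cDl_g // cNl_g. Qed.
Lemma c0l_g d (g : gmap N P) : addg g -> gcomp d (0 : gmap M N) g = 0.
Proof. by move=> H; apply: gext => i j x; rewrite /gcomp -!g0E /g0 addg0. Qed.
Lemma cDr_g d (f : gmap M N) (g g' : gmap N P) :
  gcomp d f (g + g') = gcomp d f g + gcomp d f g'.
Proof. by []. Qed.
Lemma cNr_g d (f : gmap M N) (g : gmap N P) :
  gcomp d f (- g) = - gcomp d f g.
Proof. by []. Qed.
Lemma cBr_g d (f : gmap M N) (g g' : gmap N P) :
  gcomp d f (g - g') = gcomp d f g - gcomp d f g'.
Proof. by []. Qed.
Lemma c0r_g d (f : gmap M N) : gcomp d f (0 : gmap N P) = 0.
Proof. by []. Qed.

Lemma cA_g d1 d2 d3 (f : gmap M N) (g : gmap N P) (k : gmap P Q) :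
  d1 + d2 = d3 -> gcomp d3 (gcomp d1 f g) k = gcomp d1 f (gcomp d2 g k).
Proof.
move=> e; apply: gext => i l x; rewrite /gcomp.
have e' : i + d1 + d2 = i + d3 by rewrite -addrA e.
by rewrite -e'.
Qed.

Lemma cidl_g (f : gmap M N) : gcomp 0 (gid M) f = f.
Proof.
apply: gext => i k x; rewrite /gcomp.
have : i = i + 0 by rewrite addr0.
by move: (i + 0) => j e; case: j / e; rewrite gid_refl.
Qed.

Lemma cidr_g d (f : gmap M N) : is_gmap d f -> gcomp d f (gid N) = f.
Proof.
move=> [df _]; apply: gext => i k x; rewrite /gcomp.
have [e|ne] := eqVneq k (i + d).
  by subst k; rewrite gid_refl.
by rewrite gid_ne 1?eq_sym // df.
Qed.
End Comp.

Fact gC_key : unit. Proof. by []. Qed.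
Definition gC := locked_with gC_key (@gcomp R).
Lemma gCE : gC = @gcomp R. Proof. by rewrite /gC unlock. Qed.

Section CompC.
Variables M N P Q : gmod R.
Lemma cDl d (f f' : gmap M N) (g : gmap N P) :
  addg g -> gC d (f + f') g = gC d f g + gC d f' g.
Proof. rewrite gCE; exact: cDl_g. Qed.
Lemma cNl d (f : gmap M N) (g : gmap N P) :
  addg g -> gC d (- f) g = - gC d f g.
Proof. rewrite gCE; exact: cNl_g. Qed.
Lemma cBl d (f f' : gmap M N) (g : gmap N P) :
  addg g -> gC d (f - f') g = gC d f g - gC d f' g.
Proof. rewrite gCE; exact: cBl_g. Qed.
Lemma c0l d (g : gmap N P) : addg g -> gC d (0 : gmap M N) g = 0.
Proof. rewrite gCE; exact: c0l_g. Qed.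
Lemma cDr d (f : gmap M N) (g g' : gmap N P) : gC d f (g + g') = gC d f g + gC d f g'.
Proof. by rewrite gCE. Qed.
Lemma cNr d (f : gmap M N) (g : gmap N P) : gC d f (- g) = - gC d f g.
Proof. by rewrite gCE. Qed.
Lemma cBr d (f : gmap M N) (g g' : gmap N P) : gC d f (g - g') = gC d f g - gC d f g'.
Proof. by rewrite gCE. Qed.
Lemma c0r d (f : gmap M N) : gC d f (0 : gmap N P) = 0.
Proof. by rewrite gCE. Qed.
Lemma cA d1 d2 d3 (f : gmap M N) (g : gmap N P) (k : gmap P Q) :
  d1 + d2 = d3 -> gC d3 (gC d1 f g) k = gC d1 f (gC d2 g k).
Proof. rewrite gCE; exact: cA_g. Qed.
Lemma cidl (f : gmap M N) : gC 0 (gid M) f = f.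
Proof. rewrite gCE; exact: cidl_g. Qed.
Lemma cidr d (f : gmap M N) : is_gmap d f -> gC d f (gid N) = f.
Proof. rewrite gCE; exact: cidr_g. Qed.
Lemma is_gmap_gC d e c (f : gmap M N) (g : gmap N P) :
  is_gmap d f -> is_gmap e g -> d + e = c -> is_gmap c (gC d f g).
Proof. rewrite gCE; exact: is_gmap_comp'. Qed.
Lemma addg_gC d (f : gmap M N) (g : gmap N P) : addg f -> addg g -> addg (gC d f g).
Proof. rewrite gCE; exact: addg_comp. Qed.
End CompC.
End G.

Section Dual.
Variable V : zmodType.
Record dual := Dual { dn : int; dv : V }.
HB.instance Definition _ := gen_eqMixin dual.
HB.instance Definition _ := gen_choiceMixin dual.
Definition dadd (x y : dual) := Dual (dn x + dn y) (dv x + dv y).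
Definition dopp (x : dual) := Dual (- dn x) (- dv x).
Definition dzero := Dual 0 0.
Lemma daddA : associative dadd.
Proof. by move=> [a x] [b y] [c z]; rewrite /dadd /= !addrA. Qed.
Lemma daddC : commutative dadd.
Proof. by move=> [a x] [b y]; rewrite /dadd /= addrC [x + _]addrC. Qed.
Lemma dadd0 : left_id dzero dadd.
Proof. by move=> [a x]; rewrite /dadd /= !add0r. Qed.
Lemma daddN : left_inverse dzero dopp dadd.
Proof. by move=> [a x]; rewrite /dadd /= !addNr. Qed.
HB.instance Definition _ := GRing.isZmodule.Build dual daddA daddC dadd0 daddN.
Definition dmul (x y : dual) := Dual (dn x * dn y) (dv y *~ dn x + dv x *~ dn y).
Definition done_ := Dual 1 0.
Lemma dmulA : associative dmul.
Proof.
move=> [a x] [b y] [c z]; rewrite /dmul /= mulrA; congr Dual.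
by rewrite !mulrzDl -!mulrzA [b * a]mulrC [c * a]mulrC addrA.
Qed.
Lemma dmulC : commutative dmul.
Proof. by move=> [a x] [b y]; rewrite /dmul /=; congr Dual; [exact: mulrC | exact: addrC]. Qed.
Lemma dmul1 : left_id done_ dmul.
Proof. by move=> [a x]; rewrite /dmul /= mul1r mulr1z mul0rz addr0. Qed.
Lemma dmulD : left_distributive dmul +%R.
Proof.
move=> [a x] [b y] [c z]; rewrite /dmul /= /dadd /= mulrDl; congr Dual.
by rewrite mulrzDr mulrzDl addrACA.
Qed.
Lemma done_neq0 : done_ != 0.
Proof. by apply/eqP => -[]. Qed.
HB.instance Definition _ := GRing.Zmodule_isComNzRing.Build dual dmulA dmulC dmul1 dmulD done_neq0.

Definition emb (v : V) : dual := Dual 0 v.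
Lemma embD x y : emb (x + y) = emb x + emb y.
Proof. by rewrite /emb; apply/(congr2 Dual) => //=; rewrite addr0. Qed.
Lemma embN x : emb (- x) = - emb x.
Proof. by rewrite /emb; apply/(congr2 Dual) => //=; rewrite oppr0. Qed.
Lemma emb0 : emb 0 = 0.
Proof. by []. Qed.
Lemma emb_inj : injective emb.
Proof. by move=> x y []. Qed.
End Dual.

Ltac abel := apply: emb_inj; rewrite ?(embD, embN, emb0); ring.


Ltac ra1 := first [ rewrite (cA (d2 := -1)); [|done] | rewrite (cA (d2 := 0)); [|done] | rewrite (cA (d2 := 1)); [|done] | rewrite (cA (d2 := 2)); [|done] | rewrite (cA (d2 := -2)); [|done] ].
Ltac gm := repeat first [ eassumption | apply: is_gmap_id | apply: is_gmap_add | apply: is_gmap_opp | apply: is_gmap_gC | done ].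
Ltac ad := repeat first [ assumption | apply: addg_gC | apply: addg_add | apply: addg_opp | apply: addg_id | apply: addg_zero ].

Unset Implicit Arguments.
Theorem lemma1p8 (R : pzRingType) (L M : gmod R)
  (bL : gmap L L) (bM : gmap M M) (i : gmap L M) (p : gmap M L) (h : gmap M M)
  (delta : gmap M M) (inv : gmap M M) :
  is_complex bL -> is_complex bM ->
  is_chain_map bL bM i -> is_chain_map bM bL p ->
  is_gmap 1 h ->
  gequiv (gcomp 0 p i) (gadd (gid M) (gadd (gcomp 1 h bM) (gcomp (-1) bM h))) ->
  is_gmap (-1) delta ->
  gequiv (gcomp (-1) (gadd bM delta) (gadd bM delta)) (@g0 R M M) ->
  is_gmap 0 inv ->
  gequiv (gcomp 0 (gsub (gid M) (gcomp 1 h delta)) inv) (gid M) ->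
  gequiv (gcomp 0 inv (gsub (gid M) (gcomp 1 h delta))) (gid M) ->
  let A := gcomp (-1) delta inv in
  let i_inf := gadd i (gcomp (-1) (gcomp 0 i A) h) in
  let p_inf := gadd p (gcomp 0 (gcomp 1 h A) p) in
  let b_inf := gadd bL (gcomp (-1) (gcomp 0 i A) p) in
  null_homotopic b_inf bM (gcomp 0 (gsub (gcomp 0 i_inf p) (gid L)) i) /\
  null_homotopic bM b_inf (gcomp 0 p (gsub (gcomp 0 i p_inf) (gid L))) /\
  null_homotopic (gadd bM delta) bL (gcomp 0 p_inf (gsub (gcomp 0 i_inf p) (gid L))) /\
  null_homotopic bL (gadd bM delta) (gcomp 0 (gsub (gcomp 0 i p_inf) (gid L)) i_inf).
Proof.
move=> [bLg _] [bg bb] [ig iC] [pg pC] hg Hip dg Pd invg I1 I2 A i_inf p_inf b_inf.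
move/gext: bb; move/gext: iC; move/gext: pC; move/gext: Hip; move/gext: Pd.
move/gext: I1; move/gext: I2.
rewrite !gaddE !gsubE !g0E -!gCE => I2 I1 Pd Hip pC iC bb.
have AE : A = gC (-1) delta inv by rewrite gCE.
clearbody A.
have Ag : is_gmap (-1) A by rewrite AE; gm.
have abL := addg_is bLg; have ab := addg_is bg; have ai := addg_is ig.
have ap := addg_is pg; have ah := addg_is hg; have adl := addg_is dg.
have ainv := addg_is invg; have aA := addg_is Ag.
have BD : gC (-1) bM delta + gC (-1) delta bM = - gC (-1) delta delta.
  move: Pd; rewrite cDl; last by ad.
  rewrite !cDr bb add0r => /eqP; rewrite addrA addr_eq0 => /eqP //.
have I1' : inv - gC 1 h A = gid M.
  by rewrite -I1 cBl // cidl (cA (d2 := -1)) // -AE.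
have A1 : A = delta + gC (-1) A (gC 1 h delta).
  have := f_equal (gC (-1) delta) I2.
  rewrite (cidr dg) -(cA (d3 := -1)) // -AE cBr (cidr Ag).
  by move/eqP; rewrite subr_eq => /eqP.
have A2 : A = delta + gC (-1) delta (gC 1 h A).
  have := f_equal (gC (-1) delta) I1'.
  rewrite (cidr dg) cBr -AE.
  by move/eqP; rewrite subr_eq => /eqP.
Ltac nrm := repeat first [ ra1 | rewrite cidl | rewrite cDr | rewrite cNr | rewrite c0r | (rewrite cDl; [|by ad]) | (rewrite cNl; [|by ad]) | (rewrite c0l; [|by ad]) ].
have A1' : gC (-1) A (gC 1 h delta) = A - delta by rewrite [in RHS]A1 addrC addKr.
have HipX : forall P (X : gmap M P), addg X -> gC 0 p (gC 0 i X) =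
   X + gC 1 h (gC (-1) bM X) + gC (-1) bM (gC 1 h X).
  move=> P X aX; rewrite -(cA (d3 := 0)) // Hip; nrm; by rewrite addrA.
have Ab : gC (-1) A bM = gC (-1) delta bM + gC (-1) A (gC 1 h (gC (-1) delta bM)).
  by rewrite {1}A1; nrm.
have Ad : gC (-1) A delta = gC (-1) delta delta + gC (-1) A (gC 1 h (gC (-1) delta delta)).
  by rewrite {1}A1; nrm.
have BD' : gC (-1) bM delta = - gC (-1) delta delta - gC (-1) delta bM.
  by rewrite -BD addrK.
set S := gC (-1) A bM + gC (-1) bM A + gC (-1) A (gC 0 p (gC 0 i A)).
have Sg : is_gmap (-2) S by rewrite /S; gm.
have T0 : S - gC (-2) S (gC 1 h delta) = 0.
  rewrite /S; nrm.
  rewrite A1'; nrm.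
  rewrite (HipX _ delta) //; nrm.
  rewrite Ab; nrm. rewrite Ad BD'; nrm.
  abel.
have K0 : S = 0.
  have e : S = gC (-2) S (gid M) by rewrite (cidr Sg).
  rewrite e -I1 -(cA (d1:=-2) (d2:=0) (d3:=-2)) // cBr (cidr Sg) T0 c0l //.
have KX : forall P (X : gmap M P), addg X ->
    gC (-1) A (gC 0 p (gC 0 i (gC (-1) A X))) =
    - gC (-1) A (gC (-1) bM X) - gC (-1) bM (gC (-1) A X).
  move=> P X aX; have := f_equal (fun F => gC (-2) F X) K0.
  rewrite /= c0l // /S; nrm => e.
  by rewrite -[RHS]addr0 -e; abel.
have iCX : forall P (X : gmap M P), gC 0 i (gC (-1) bM X) = gC (-1) bL (gC 0 i X).
  by move=> P X; rewrite -(cA (d3:=-1)) // iC (cA (d2:=0)).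
have pCX : forall P (X : gmap L P), gC 0 p (gC (-1) bL X) = gC (-1) bM (gC 0 p X).
  by move=> P X; rewrite -(cA (d3:=-1)) // pC (cA (d2:=0)).
have A1X : forall P (X : gmap M P), addg X ->
    gC (-1) A (gC 1 h (gC (-1) delta X)) = gC (-1) A X - gC (-1) delta X.
  move=> P X aX; have := f_equal (fun F => gC (-1) F X) A1'.
  by rewrite /= cBl //; nrm.
have A2' : gC (-1) delta (gC 1 h A) = A - delta by rewrite [in RHS]A2 addrC addKr.
have A2X : forall P (X : gmap M P), addg X ->
    gC (-1) delta (gC 1 h (gC (-1) A X)) = gC (-1) A X - gC (-1) delta X.
  move=> P X aX; have := f_equal (fun F => gC (-1) F X) A2'.
  by rewrite /= cBl //; nrm.
set hinf := h + gC 1 h (gC (-1) A h).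
have PI : gC 0 p_inf i_inf = gid M + gC 1 hinf (bM + delta) + gC (-1) (bM + delta) hinf.
  rewrite /p_inf /i_inf /hinf !gaddE -!gCE; nrm.
  rewrite KX //.
  rewrite (HipX _ (gC (-1) A h)); last by ad.
  rewrite Hip; nrm; rewrite ?(cidr Ag).
  rewrite A1' A2X //; nrm.
  abel.
have pinfg : is_gmap 0 p_inf by rewrite /p_inf gaddE -!gCE; gm.
have ainf : addg i_inf by rewrite /i_inf gaddE -!gCE; ad.
split.
  exists (gC 0 i h + gC 0 i (gC (-1) A (gC 1 h h))); split; first by gm.
  apply: eq_gequiv; rewrite !gaddE -!gCE /b_inf /i_inf !gaddE -!gCE; nrm.
  rewrite KX; last by ad.
  rewrite (HipX _ h) // Hip -!iCX; nrm.
  rewrite ?(cidr ig) ?(cidr hg).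
  abel.
split.
  exists (gC 1 h p + gC 1 h (gC 1 h (gC (-1) A p))); split; first by gm.
  apply: eq_gequiv; rewrite !gaddE -!gCE /b_inf /p_inf !gaddE -!gCE; nrm.
  rewrite KX //.
  rewrite !HipX; try by ad.
  rewrite pC; nrm.
  rewrite ?(cidr pg).
  abel.
split.
  exists (gC 1 hinf p); split; first by rewrite /hinf; gm.
  apply: eq_gequiv; rewrite !gaddE -!gCE.
  rewrite cBr -(cA (d1:=0) (d2:=0) (d3:=0) p_inf) // PI (cidr pinfg).
  rewrite /p_inf /hinf !gaddE -!gCE; nrm.
  rewrite pC A1X //; nrm.
  abel.
exists (gC 0 i hinf); split; first by rewrite /hinf; gm.
apply: eq_gequiv; rewrite !gaddE -!gCE.
rewrite cBl // (cA (d2:=0)) // PI cidl.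
rewrite /i_inf /hinf !gaddE -!gCE; nrm.
rewrite !iCX A2X //; nrm.
rewrite ?(cidr ig).
abel.
Qed.
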